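(* Let $\mathcal{S}$ be a state space, let $\mathcal{A}\subset\mathbb{R}^d$ be an action space of finite positive Lebesgue measure, let $R:\mathcal{S}\times\mathcal{A}\to\mathbb{R}$ be a reward function, let $\tau(\cdot\mid s,a)$ be a transition kernel, and let $\gamma\in(0,1)$ and $\tilde{\alpha}>0$. Let $\mathcal{Q}$ be a probability distribution over (measurable) functions $Q:\mathcal{S}\times\mathcal{A}\to\mathbb{R}$ such that for every $(s,a)$ the random variable $Q(s,a)$, $Q\sim\mathcal{Q}$, has bounded support and is sub-Gaussian with mean $\mu(s,a)$ and variance proxy $\sigma^2(s,a)$. For a next state $s'$ define $$\mathcal{T}^{*}Q(s,a)=R(s,a)+\gamma\,\mathbb{E}_{Q\sim\mathcal{Q}}\Big[\tilde{\alpha}\log\Big(\int_{\mathcal{A}}\exp\big(\tilde{\alpha}^{-1}Q(s',a')\big)\,da'\Big)\Big],$$ and let $$\mathcal{T}^{*}\mu(s,a)=R(s,a)+\gamma\,\mathbb{E}_{s'\sim\tau(\cdot\mid s,a)}\Big[\tilde{\alpha}\log\Big(\int_{\mathcal{A}}\exp\big(\tilde{\alpha}^{-1}\mu(s',a')\big)\,da'\Big)\Big].$$ Define the overestimation error $\epsilon(s,a)=\mathbb{E}_{s'\sim\tau(\cdot\mid s,a)}\big[\mathcal{T}^{*}Q(s,a)\big]-\mathcal{T}^{*}\mu(s,a)$. Then for all $(s,a)$, $$\epsilon(s,a)\le\frac{\gamma}{2\tilde{\alpha}}\,\mathbb{E}_{s'\sim\tau(\cdot\mid s,a)}\Big[\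sup_{a'\in\mathcal{A}}\sigma^2(s',a')\Big].$$
   Context: A real random variable $X$ with mean $\mu=\mathbb{E}[X]$ is called sub-Gaussian with variance proxy $\sigma^2$ if $\mathbb{E}[\exp(\lambda X)]\le\exp(\lambda\mu+\tfrac12\lambda^2\sigma^2)$ for all $\lambda\in\mathbb{R}$. Here $\mu(s,a)=\mathbb{E}_{Q\sim\mathcal{Q}}[Q(s,a)]$, and all expectations are assumed well defined. *)

(* Defs.v *)
From HB Require Import structures.
From mathcomp Require Import all_boot all_order all_algebra.
From mathcomp Require Import all_classical all_reals all_analysis.
From mathcomp Require Import measurable_realfun.
Set Implicit Arguments. Unset Strict Implicit. Unset Printing Implicit Defensive.
Import Order.TTheory GRing.Theory Num.Theory.
Local Open Scope classical_set_scope.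
Local Open Scope ring_scope.

(* d-dimensional Lebesgue measure on R^d = d.-tuple R, defined as the  *)
(* iterated product of the 1-dimensional Lebesgue measure (on the      *)
(* product sigma-algebra of the tuple type).                           *)
Definition tuple_cons (R : realType) (n : nat) (p : R * n.-tuple R)
  : n.+1.-tuple R := [tuple of p.1 :: p.2].

Fixpoint lebesgue_tuple (R : realType) (n : nat)
  : set (n.-tuple R) -> \bar R :=
  match n with
  | 0 => \d_([tuple] : 0.-tuple R)
  | n'.+1 => pushforward
               ((@lebesgue_measure R) \x (@lebesgue_tuple R n'))%E
               (@tuple_cons R n')
  end.

Definition subgaussian d (Omega : measurableType d) (R : realType)
  (P : probability Omega R) (X : Omega -> R) (m s2 : R) : Prop :=
  [/\ measurable_fun setT X,
      (\int[P]_w (X w)%:E = m%:E)%E &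
      forall l : R,
        (\int[P]_w (expR (l * X w))%:E <=
          (expR (l * m + l ^+ 2 * s2 / 2))%:E)%E].

Definition soft_value (R : realType) (d : nat) (A : set (d.-tuple R))
  (alpha : R) (f : d.-tuple R -> R) : R :=
  alpha * ln (fine (\int[@lebesgue_tuple R d]_(a' in A)
                      (expR (f a' / alpha))%:E)%E).

Definition TstarQ d (Omega : measurableType d) (R : realType)
  (P : probability Omega R) (S : Type) (dA : nat)
  (A : set (dA.-tuple R)) (rew : S -> dA.-tuple R -> R) (gamma alpha : R)
  (Q : Omega -> S -> dA.-tuple R -> R) (s : S) (a : dA.-tuple R) (s' : S)
  : R :=
  rew s a + gamma * fine (\int[P]_w (soft_value A alpha (Q w s'))%:E)%E.

Definition Tstarmu dS (S : measurableType dS) (R : realType) (dA : nat)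
  (A : set (dA.-tuple R)) (rew : S -> dA.-tuple R -> R) (gamma alpha : R)
  (tau : R.-pker (S * dA.-tuple R)%type ~> S)
  (mu : S -> dA.-tuple R -> R) (s : S) (a : dA.-tuple R) : R :=
  rew s a + gamma * fine (\int[tau (s, a)]_s' (soft_value A alpha (mu s'))%:E)%E.

Definition overest_error dO (Omega : measurableType dO) dS
  (S : measurableType dS) (R : realType) (P : probability Omega R) (dA : nat)
  (A : set (dA.-tuple R)) (rew : S -> dA.-tuple R -> R) (gamma alpha : R)
  (tau : R.-pker (S * dA.-tuple R)%type ~> S)
  (Q : Omega -> S -> dA.-tuple R -> R) (mu : S -> dA.-tuple R -> R)
  (s : S) (a : dA.-tuple R) : \bar R :=
  (\int[tau (s, a)]_s' (TstarQ P A rew gamma alpha Q s a s')%:E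
   - (Tstarmu A rew gamma alpha tau mu s a)%:E)%E.

(* Main.v *)
Require Import Defs.
From HB Require Import structures.
From mathcomp Require Import all_boot all_order all_algebra.
From mathcomp Require Import all_classical all_reals all_analysis.
From mathcomp Require Import measurable_realfun.
From mathcomp Require Import ring lra.
Import Order.TTheory GRing.Theory Num.Theory.
Local Open Scope classical_set_scope.
Local Open Scope ring_scope.
Set Implicit Arguments. Unset Strict Implicit. Unset Printing Implicit Defensive.

Section prodm.
Local Open Scope ereal_scope.
Context d1 d2 (T1 : measurableType d1) (T2 : measurableType d2) (R : realType).
Variable m1 : {sigma_finite_measure set T1 -> \bar R}.
Variable m2 : {sigma_finite_measure set T2 -> \bar R}.
Definition prodm := (m1 \x m2)%E.
HB.instance Definition _ := Measure.copy prodm (m1 \x m2)%E.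
Let prodm_sf : sigma_finite setT prodm.
Proof.
have /sigma_finiteP[F [TF ndF Foo]] := sigma_finiteT m1.
have /sigma_finiteP[G [TG ndG Goo]] := sigma_finiteT m2.
exists (fun n => F n `*` G n).
 rewrite -setXTT TF TG predeqE => -[x y]; split.
    move=> [/= [n _ Fnx] [k _ Gky]]; exists (maxn n k) => //; split.
    - by move: x Fnx; exact/subsetPset/ndF/leq_maxl.
    - by move: y Gky; exact/subsetPset/ndG/leq_maxr.
  by move=> [n _ []/= ? ?]; split; exists n.
move=> k; have [? ?] := Foo k; have [? ?] := Goo k.
split; first exact: measurableX.
by rewrite /prodm product_measure1E// lte_mul_pinfty// ge0_fin_numE.
Qed.
HB.instance Definition _ := Measure_isSigmaFinite.Build _ _ _ prodm prodm_sf.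
End prodm.
Section pfwd.
Local Open Scope ereal_scope.
Context d d' (T1 : measurableType d) (T2 : measurableType d') (R : realType).
Variables (m : {sigma_finite_measure set T1 -> \bar R}) (f : T1 -> T2) (g : T2 -> T1).
Definition pfwd (mf : measurable_fun setT f) (mg : measurable_fun setT g)
  (gf : cancel f g) := pushforward m f.
Variables (mf : measurable_fun setT f) (mg : measurable_fun setT g) (gf : cancel f g).

Let pf0 : pfwd mf mg gf set0 = 0.
Proof. by rewrite /pfwd /pushforward preimage_set0 measure0. Qed.

Let pf_ge0 A : 0 <= pfwd mf mg gf A.
Proof. by apply: measure_ge0. Qed.

Let pf_sa : semi_sigma_additive (pfwd mf mg gf).
Proof.
move=> F mF tF mUF; rewrite /pfwd /pushforward preimage_bigcup.
apply: measure_semi_sigma_additive.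
- by move=> n; rewrite -[X in measurable X]setTI; exact: mf.
- apply/trivIsetP => /= i j _ _ ij; rewrite -preimage_setI.
  by move/trivIsetP : tF => /(_ _ _ _ _ ij) ->//; rewrite preimage_set0.
- by rewrite -preimage_bigcup -[X in measurable X]setTI; exact: mf.
Qed.

HB.instance Definition _ := isMeasure.Build _ _ _
  (pfwd mf mg gf) pf0 pf_ge0 pf_sa.

Let pf_sf : sigma_finite setT (pfwd mf mg gf).
Proof.
have [F TF Fm] := sigma_finiteT m.
exists (fun i => g @^-1` F i).
  by rewrite -preimage_bigcup -TF.
move=> i; split.
  by rewrite -[X in measurable X]setTI; apply: mg; case: (Fm i).
rewrite /pfwd /pushforward -comp_preimage.
have -> : (g \o f) @^-1` F i = F i.
  by apply/seteqP; split => x /=; rewrite gf.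
by case: (Fm i).
Qed.

HB.instance Definition _ := Measure_isSigmaFinite.Build _ _ _
  (pfwd mf mg gf) pf_sf.
End pfwd.
Lemma lebesgue_tuple_sf (R : realType) n :
  exists m : {sigma_finite_measure set (n.-tuple R) -> \bar R},
    @lebesgue_tuple R n = m.
Proof.
elim: n => [|n [m IH]]; first by exists (\d_([tuple] : 0.-tuple R)).
have mf : measurable_fun setT (@tuple_cons R n).
  rewrite /tuple_cons.
  exact: (measurable_cons measurable_fst measurable_snd).
pose g := fun t : n.+1.-tuple R => (thead t, [tuple of behead t] : n.-tuple R).
have mg : measurable_fun setT g.
  apply: measurable_fun_pair.
    exact: measurable_tnth.
  exact: measurable_behead.
have gf : cancel (@tuple_cons R n) g.
  by case=> x t; rewrite /g /tuple_cons /=; congr pair; apply: val_inj.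
pose pm := prodm (@lebesgue_measure R : {sigma_finite_measure set _ -> \bar R}) m.
exists (@pfwd _ _ _ _ R pm (@tuple_cons R n) g mf mg gf).
by rewrite /= IH.
Qed.

Lemma int_exp_gt0 d (T : measurableType d) (R : realType)
  (m : {measure set T -> \bar R}) (A : set T) (g : T -> R) :
  measurable A -> (0 < m A)%E ->
  m.-integrable A (fun a => (expR (g a))%:E) ->
  0 < fine (\int[m]_(a in A) (expR (g a))%:E)%E.
Proof.
move=> mA mA0 ig.
have fin := integrable_fin_num mA ig.
have ge0 : (0 <= \int[m]_(a in A) (expR (g a))%:E)%E.
  by apply: integral_ge0 => x _; rewrite lee_fin expR_ge0.
rewrite lt_neqAle fine_ge0 // andbT.
apply/negP => /eqP H.
have H0 : (\int[m]_(a in A) (expR (g a))%:E)%E = 0%E.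
  by rewrite -(fineK fin) -H.
have mg : measurable_fun A (fun a => (expR (g a))%:E).
  by case/integrableP: ig.
have : (\int[m]_(a in A) `|(expR (g a))%:E|)%E = 0%E.
  by rewrite -H0; apply: eq_integral => x _; rewrite gee0_abs // lee_fin expR_ge0.
move/(ae_eq_integral_abs m mA mg) => [N [mN mN0 sN]].
have : (m A <= m N)%E.
  apply: le_measure; rewrite ?inE //.
  move=> x Ax; apply: sN => /= /(_ Ax) /= /eqP.
  by rewrite eqe gt_eqF // expR_gt0.
by rewrite mN0 leNgt mA0.
Qed.

Definition svm d (T : measurableType d) (R : realType) (m : set T -> \bar R)
  (A : set T) (alpha : R) (f : T -> R) : R :=
  alpha * ln (fine (\int[m]_(a' in A) (expR (f a' / alpha))%:E)%E).

Lemma pointwise dO (Om : measurableType dO) (R : realType) (P : probability Om R)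
  dT (T : measurableType dT) (m : {sigma_finite_measure set T -> \bar R})
  (A : set T) (alpha : R) (q : Om -> T -> R) (mu s2 : T -> R) (k : R) :
  measurable A -> (0 < m A)%E -> 0 < alpha ->
  (forall a, subgaussian P (fun w => q w a) (mu a) (s2 a)) ->
  measurable_fun setT (fun p : Om * T => q p.1 p.2) ->
  (forall w, m.-integrable A (fun a => (expR (q w a / alpha))%:E)) ->
  m.-integrable A (fun a => (expR (mu a / alpha))%:E) ->
  P.-integrable setT (fun w => (svm m A alpha (q w))%:E) ->
  (forall a, A a -> s2 a <= k) ->
  (\int[P]_w (svm m A alpha (q w))%:E <=
     (svm m A alpha mu + k / (2 * alpha))%:E)%E.
Proof.
move=> mA mA0 a0 sg mq iq imu isv sk.
set Fm := fine (\int[m]_(a' in A) (expR (mu a' / alpha))%:E)%E.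
have Fm0 : 0 < Fm by exact: int_exp_gt0.
set K := expR (alpha^-1 ^+ 2 * k / 2).
set c := K * Fm.
have c0 : 0 < c by rewrite mulr_gt0 // expR_gt0.
set Fw := fun w => fine (\int[m]_(a' in A) (expR (q w a' / alpha))%:E)%E.
have Fw0 w : 0 < Fw w by exact: int_exp_gt0.
have h1 w : svm m A alpha (q w) <= alpha * ln c - alpha + (alpha / c) * Fw w.
  rewrite /svm -/(Fw w).
  have := expR_ge1Dx (ln (Fw w) - ln c).
  rewrite expRB !lnK ?posrE // => h.
  have := ler_wpM2l (ltW a0) h.
  rewrite mulrA. nra.
pose g := fun p : Om * T => (expR (q p.1 p.2 / alpha))%:E.
have mg : measurable_fun setT g.
  apply/measurable_EFinP; apply: measurableT_comp => //.
  by apply: measurable_funM => //.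
pose f := g \_ (setT `*` A).
have mf : measurable_fun setT f.
  apply/(measurable_restrictT _ (measurableX measurableT mA)); exact: measurable_funTS.
have f0 p : (0 <= f p)%E.
  by rewrite /f patchE; case: ifPn => // _; rewrite lee_fin expR_ge0.
have fE w y : f (w, y) = ((fun a => (expR (q w a / alpha))%:E) \_ A) y.
  by rewrite /f !patchE in_setX in_setT.
have FwE w : (Fw w)%:E = fubini_F m f w.
  rewrite /Fw fineK; last exact: integrable_fin_num.
  rewrite /fubini_F [in RHS]integral_mkcond [in LHS]integral_mkcond.
  apply: eq_integral => y _; rewrite [RHS]patchE in_setT fE patchE /=; done.
have mFw : measurable_fun setT (fun w => (Fw w)%:E).
  rewrite (_ : (fun w => (Fw w)%:E) = fubini_F m f); last by apply/funext => w; rewrite FwE.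
  exact: measurable_fun_fubini_tonelli_F.
have imu' := imu; case/integrableP: imu' => mmu _.
have hF : (\int[P]_w (Fw w)%:E <= c%:E)%E.
  have -> : (\int[P]_w (Fw w)%:E = \int[P]_w \int[m]_y f (w, y))%E.
    by apply: eq_integral => w _; rewrite FwE.
  rewrite (@fubini_tonelli _ _ _ _ _ P m f mf f0).
  have mK : measurable_fun A (fun a => (K * expR (mu a / alpha))%:E).
    apply/measurable_EFinP; apply: measurable_funM => //.
    exact/measurable_EFinP.
  apply: (@le_trans _ _ (\int[m]_y ((fun a => (K * expR (mu a / alpha))%:E) \_ A) y)%E).
    apply: ge0_le_integral => //.
    - by move=> y _; apply: integral_ge0 => x _.
    - exact: (measurable_fun_fubini_tonelli_G f mf f0).
    - exact/(measurable_restrictT _ mA).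
    move=> y _; rewrite patchE; case: ifPn => yA.
      rewrite (eq_integral (fun x => (expR (alpha^-1 * q x y))%:E)); last first.
        by move=> x _; rewrite fE patchE yA mulrC.
      have [_ _ /(_ alpha^-1) sgy] := sg y.
      apply: (le_trans sgy); rewrite lee_fin /K -expRD ler_expR.
      have := sk y (set_mem yA) => hk.
      have h2 : alpha^-1 ^+ 2 * s2 y <= alpha^-1 ^+ 2 * k.
        by apply: ler_wpM2l => //; exact: sqr_ge0.
      rewrite (mulrC (mu y)). lra.
    by rewrite integral0_eq // => x _; rewrite fE patchE (negbTE yA).
  rewrite -integral_mkcond.
  under eq_integral do rewrite EFinM.
  rewrite integralZl // /c EFinM /Fm fineK //.
  exact: integrable_fin_num.
have finF : (\int[P]_w (Fw w)%:E)%E \is a fin_num.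
  rewrite ge0_fin_numE; first by apply: (le_lt_trans hF); rewrite ltry.
  by apply: integral_ge0 => w _; rewrite lee_fin ltW.
have iFw : P.-integrable setT (fun w => (Fw w)%:E).
  apply/integrableP; split => //.
  rewrite (eq_integral (fun w => (Fw w)%:E)); last first.
    by move=> w _; rewrite gee0_abs // lee_fin ltW.
  by rewrite -ge0_fin_numE ?finF // integral_ge0 // => w _; rewrite lee_fin ltW.
pose G := (fun w : Om => (alpha * ln c - alpha)%:E) \+ (fun w => (alpha / c)%:E * (Fw w)%:E)%E.
have iG : P.-integrable setT G.
  apply: integrableD => //; last exact: integrableZl.
  exact: finite_measure_integrable_cst.
apply: (@le_trans _ _ (\int[P]_w G w)%E).
  apply: le_integral => // w _; rewrite /G /= -EFinM -EFinD lee_fin; exact: h1.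
rewrite /G integralD //; last 2 first.
  exact: finite_measure_integrable_cst.
  exact: integrableZl.
rewrite integral_cst //.
set tP := (X in (_ * X + _)%E).
have -> : tP = 1%E by exact: probability_setT.
rewrite mule1 integralZl //.
rewrite -(fineK finF) -EFinM -EFinD lee_fin.
have hF' : fine (\int[P]_w (Fw w)%:E)%E <= c.
  by rewrite -lee_fin fineK.
have := ler_wpM2l (ltW (divr_gt0 a0 c0)) hF'.
rewrite divfK ?gt_eqF // => h3.
suff -> : svm m A alpha mu + k / (2 * alpha) = alpha * ln c by lra.
rewrite /svm -/Fm /c lnM ?posrE ?expR_gt0 // /K expRK.
by field; rewrite gt_eqF.
Qed.

Lemma sg_ge0 dO (Om : measurableType dO) (R : realType) (P : probability Om R)
  (X : Om -> R) (m s : R) : subgaussian P X m s -> 0 <= s.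
Proof.
move=> [mX EX mgf].
have iexp l : P.-integrable setT (fun w => (expR (l * X w))%:E).
  apply/integrableP; split.
    apply/measurable_EFinP; apply: measurableT_comp => //.
    exact: measurable_funM.
  rewrite (eq_integral (fun w => (expR (l * X w))%:E)); last first.
    by move=> w _; rewrite gee0_abs // lee_fin expR_ge0.
  by apply: (le_lt_trans (mgf l)); rewrite ltry.
have iX : P.-integrable setT (fun w => (X w)%:E).
  apply/integrableP; split; first exact/measurable_EFinP.
  apply: (@le_lt_trans _ _ (\int[P]_w ((expR (1 * X w))%:E + (expR (-1 * X w))%:E))%E).
    apply: ge0_le_integral => //.
    - apply: (@measurableT_comp _ _ _ _ _ _ abse) => //; exact/measurable_EFinP.
    - apply: emeasurable_funD; [case/integrableP: (iexp 1) | case/integrableP: (iexp (-1))] => //.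
    move=> w _; rewrite -EFinD lee_fin mul1r mulN1r.
    have h1 := expR_ge1Dx (X w); have h2 := expR_ge1Dx (- X w).
    have h3 := expR_gt0 (X w); have h4 := expR_gt0 (- X w).
    case: (lerP 0 (X w)) => hx; [rewrite ger0_norm //|rewrite ltr0_norm //]; lra.
  rewrite integralD //; try exact: iexp.
  by rewrite lte_add_pinfty // (le_lt_trans (mgf _)) // ltry.
pose G := (fun w : Om => (expR m * (1 - m))%:E) \+ (fun w => (expR m)%:E * (X w)%:E)%E.
have iG : P.-integrable setT G.
  apply: integrableD => //; last exact: integrableZl.
  exact: finite_measure_integrable_cst.
have : (\int[P]_w G w <= \int[P]_w (expR (1 * X w))%:E)%E.
  apply: le_integral => // w _; rewrite /G /= -EFinM -EFinD lee_fin mul1r.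
  have := expR_ge1Dx (X w - m); rewrite expRB => h.
  have hm := expR_gt0 m.
  have := ler_wpM2l (ltW hm) h; rewrite mulrCA divff ?gt_eqF // mulr1.
  move=> h'; nra.
rewrite /G integralD //; last 2 first.
  exact: finite_measure_integrable_cst.
  exact: integrableZl.
rewrite integral_cst //.
set tP := (X in (_ * X + _)%E).
have -> : tP = 1%E by exact: probability_setT.
rewrite mule1 integralZl // EX -EFinM -EFinD.
move=> /le_trans /(_ (mgf 1)); rewrite lee_fin.
have -> : expR m * (1 - m) + expR m * m = expR m by ring.
rewrite ler_expR mul1r expr1n mul1r; lra.
Qed.

Unset Implicit Arguments.

Theorem theorem2 (R : realType)
  (dS : measure_display) (S : measurableType dS)
  (dA : nat) (A : set (dA.-tuple R))
  (rew : S -> dA.-tuple R -> R)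
  (tau : R.-pker (S * dA.-tuple R)%type ~> S)
  (gamma alpha : R)
  (dO : measure_display) (Omega : measurableType dO) (P : probability Omega R)
  (Q : Omega -> S -> dA.-tuple R -> R)
  (mu sigma2 : S -> dA.-tuple R -> R) :
  (* action space: finite positive Lebesgue measure *)
  measurable A ->
  (0 < @lebesgue_tuple R dA A)%E -> (@lebesgue_tuple R dA A < +oo)%E ->
  0 < gamma < 1 -> 0 < alpha ->
  (* Q(s,a), Q ~ calQ, has bounded support ... *)
  (forall s a, exists M : R, {ae P, forall w, `|Q w s a| <= M}) ->
  (* ... and is sub-Gaussian with mean mu(s,a), variance proxy sigma2(s,a) *)
  (forall s a, subgaussian P (fun w => Q w s a) (mu s a) (sigma2 s a)) ->
  (* all expectations / integrals are well defined *)
  (forall s', measurable_fun setT (fun p : Omega * dA.-tuple R => Q p.1 s' p.2)) ->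
  (forall s' w, (@lebesgue_tuple R dA).-integrable A
                  (fun a' => (expR (Q w s' a' / alpha))%:E)) ->
  (forall s', (@lebesgue_tuple R dA).-integrable A
                  (fun a' => (expR (mu s' a' / alpha))%:E)) ->
  (forall s', P.-integrable setT (fun w => (soft_value A alpha (Q w s'))%:E)) ->
  (forall s a, (tau (s, a)).-integrable setT
                 (fun s' => (TstarQ P A rew gamma alpha Q s a s')%:E)) ->
  (forall s a, (tau (s, a)).-integrable setT
                 (fun s' => (soft_value A alpha (mu s'))%:E)) ->
  measurable_fun [set: S]
    ((fun s' => ereal_sup [set (sigma2 s' a')%:E | a' in A]) : S -> \bar R) ->
  forall (s : S) (a : dA.-tuple R),
    (overest_error P A rew gamma alpha tau Q mu s a <=
     (gamma / (2 * alpha))%:E *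
       \int[tau (s, a)]_s' ereal_sup [set (sigma2 s' a')%:E | a' in A])%E.
Proof.
move=> mA A0 Afin /andP[g0 g1] a0 _ sg mQ iQ imu isv iTQ isvmu mK s a.
have [m Hm] := lebesgue_tuple_sf R dA.
have svE f : soft_value A alpha f = svm m A alpha f by rewrite /soft_value Hm.
rewrite Hm in A0 iQ imu.
set Ks := fun s' => ereal_sup [set (sigma2 s' a')%:E | a' in A].
have [x0 Ax0] : exists x, A x.
  apply/set0P/eqP => A_0; move: A0; rewrite A_0 measure0 ltxx //.
have Ks0 s' : (0 <= Ks s')%E.
  apply: (@le_trans _ _ (sigma2 s' x0)%:E).
    by rewrite lee_fin; exact: (sg_ge0 (sg s' x0)).
  by apply: ereal_sup_ubound; exists x0.
set Gq := fun s' => fine (\int[P]_w (soft_value A alpha (Q w s'))%:E)%E.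
set H := fun s' => soft_value A alpha (mu s').
have pw s' : ((Gq s' - H s')%:E <= (2 * alpha)^-1%:E * Ks s')%E.
  have := Ks0 s'; case E : (Ks s') => [k| |] // k0.
    have sk : forall a', A a' -> sigma2 s' a' <= k.
      move=> a' Aa'; rewrite -lee_fin -E; apply: ereal_sup_ubound; by exists a'.
    have := @pointwise _ _ R P _ _ m A alpha (fun w a' => Q w s' a') (mu s') (sigma2 s') k mA A0 a0 (sg s') (mQ s') (iQ s') (imu s').
    have isv' : P.-integrable setT (fun w => (svm m A alpha (Q w s'))%:E).
      by under eq_fun do rewrite -svE.
    move=> /(_ isv' sk).
    have -> : (\int[P]_w (svm m A alpha (fun a' => Q w s' a'))%:E)%E = (Gq s')%:E.
      rewrite /Gq fineK; last exact: integrable_fin_num (isv s').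
      by apply: eq_integral => w _; rewrite svE.
    rewrite /H svE lee_fin -EFinM lee_fin => h.
    rewrite mulrC; lra.
  by rewrite gt0_muley ?leey // lte_fin invr_gt0 mulr_gt0.
have t1 : tau (s, a) [set: S] = 1%E := prob_kernel (s, a).
have icst r : (tau (s, a)).-integrable setT (fun _ => r%:E).
  apply/integrableP; split; first exact: measurable_cst.
  by rewrite integral_cst // t1 mule1 ltry.
have TQE s' : TstarQ P A rew gamma alpha Q s a s' = rew s a + gamma * Gq s' by [].
have iGq : (tau (s, a)).-integrable setT (fun s' => (Gq s')%:E).
  have -> : (fun s' => (Gq s')%:E) = (fun s' => (gamma^-1)%:E *
      ((TstarQ P A rew gamma alpha Q s a s')%:E - (rew s a)%:E))%E.
    apply/funext => s'; rewrite TQE -EFinB -EFinM; congr EFin.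
    by field; rewrite gt_eqF.
  apply: integrableZl => //; apply: integrableB => //; exact: iTQ.
have iH := isvmu s a.
rewrite /overest_error /Tstarmu.
have -> : (\int[tau (s, a)]_s' (TstarQ P A rew gamma alpha Q s a s')%:E)%E =
   (\int[tau (s, a)]_s' ((fun _ => (rew s a)%:E) \+ (fun s' => gamma%:E * (Gq s')%:E)) s')%E.
  by apply: eq_integral => s' _; rewrite TQE /= EFinD EFinM.
rewrite integralD //; last exact: integrableZl.
rewrite integral_cst // t1 mule1 integralZl //.
have fin1 := integrable_fin_num measurableT iGq.
have fin2 := integrable_fin_num measurableT iH.
have -> : ((rew s a)%:E + gamma%:E * \int[tau (s, a)]_s' (Gq s')%:E -
    (rew s a + gamma * fine (\int[tau (s, a)]_s' (soft_value A alpha (mu s'))%:E))%:E)%E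
   = (gamma%:E * \int[tau (s, a)]_s' ((Gq s')%:E - (H s')%:E))%E.
  rewrite integralB // -(fineK fin1) -(fineK fin2) -EFinB -!EFinM.
  by congr EFin; rewrite /=; ring.
have mKs : measurable_fun setT (fun s' => ((2 * alpha)^-1)%:E * Ks s')%E.
  by apply: emeasurable_funM => //; exact: measurable_cst.
apply: (@le_trans _ _ (gamma%:E * \int[tau (s, a)]_s' (((2 * alpha)^-1)%:E * Ks s'))%E).
  apply: lee_wpmul2l; first by rewrite lee_fin ltW.
  rewrite integralE; rewrite -[X in (_ <= X)%E]sube0; apply: leeB.
    apply: ge0_le_integral => //.
    - apply: measurable_funepos.
      by case/integrableP: (integrableB measurableT iGq iH).
    - move=> s' _; rewrite funeposE /= ge_max pw /=.
      by rewrite mule_ge0 // lee_fin invr_ge0 mulr_ge0 // ltW.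
  by apply: integral_ge0 => s' _; exact: funeneg_ge0.
rewrite ge0_integralZl //; last by rewrite lee_fin invr_ge0 mulr_ge0 // ltW.
by rewrite muleA -EFinM.
Qed.
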